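(* Let $\Sigma$ be a non-empty finite or countably infinite alphabet and let $\mu_p$ be the probability map induced by a Bernoulli distribution $p$ on $\Sigma$. If $\alpha\in\Sigma^\omega$ is $\mu_p$-distributed, then $\alpha$ is $\mu_p$-block-distributed.
   Context: $\mu_p(a_1\cdots a_n)=\prod_{i=1}^n p(a_i)$ where $p:\Sigma\to[0,1]$, $\sum_a p(a)=1$. $\alpha$ is $\mu_p$-distributed if for every $w\in\Sigma^+$, $\lim_{N\to\infty}\#_w(\alpha|_{\le N})/N=\mu_p(w)$, where $\#_w(v)$ counts occurrences of $w$ as a contiguous block of $v$ and $\alpha|_{\le N}$ is the length-$N$ prefix. For $\alpha=x_1x_2\cdots$ and $n\ge1$, the $n$-block decomposition is $(\alpha_{(n,r)})_{r\ge1}$ with $\alpha_{(n,r)}=x_{(r-1)n+1}\cdots x_{rn}$. $\alpha$ is $\mu_p$-block-distributed if for every $n\ge1$ and every $w\in\Sigma^n$, $\lim_{k\to\infty}|\{r\le k:\alpha_{(n,r)}=w\}|/k=\mu_p(w)$. *)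

(* Defs.v *)
From mathcomp Require Import all_boot all_order all_algebra.
From mathcomp Require Import all_classical all_reals all_analysis.
Set Implicit Arguments. Unset Strict Implicit. Unset Printing Implicit Defensive.
Import Order.TTheory GRing.Theory Num.Theory.
Import numFieldNormedType.Exports.
Local Open Scope classical_set_scope.
Local Open Scope ring_scope.

(* Infinite words alpha = x_1 x_2 ... are represented by alpha : nat -> Sigma,
   with alpha i = x_{i+1}. *)

Definition mu_p {R : realType} {Sigma : Type} (p : Sigma -> R) (w : seq Sigma) : R :=
  \prod_(a <- w) p a.

Definition factor {Sigma : Type} (alpha : nat -> Sigma) (i m : nat) : seq Sigma :=
  mkseq (fun j => alpha (i + j)) m.

(* #_w(alpha|_{<=N}) : number of occurrences of w as a contiguous block
   of the length-N prefix of alpha *)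
Definition occ {Sigma : eqType} (alpha : nat -> Sigma) (w : seq Sigma) (N : nat) : nat :=
  \sum_(i < N) ((i + size w <= N) && (factor alpha i (size w) == w)).

Definition mu_distributed {R : realType} {Sigma : eqType}
  (p : Sigma -> R) (alpha : nat -> Sigma) : Prop :=
  forall w : seq Sigma, (0 < size w)%N ->
    (fun N : nat => (occ alpha w N)%:R / N%:R) @ \oo --> mu_p p w.

(* the r-th block (r >= 1) of the n-block decomposition: x_{(r-1)n+1} ... x_{rn} *)
Definition block {Sigma : Type} (alpha : nat -> Sigma) (n r : nat) : seq Sigma :=
  factor alpha ((r - 1) * n) n.

Definition block_count {Sigma : eqType} (alpha : nat -> Sigma) (n : nat)
  (w : seq Sigma) (k : nat) : nat :=
  \sum_(1 <= r < k.+1) (block alpha n r == w).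

Definition mu_block_distributed {R : realType} {Sigma : eqType}
  (p : Sigma -> R) (alpha : nat -> Sigma) : Prop :=
  forall (n : nat), (1 <= n)%N -> forall w : seq Sigma, size w = n ->
    (fun k : nat => (block_count alpha n w k)%:R / k%:R) @ \oo --> mu_p p w.

(* Main.v *)
From Pilot Require Import Defs.
From mathcomp Require Import all_boot all_order all_algebra.
From mathcomp Require Import all_classical all_reals all_analysis.
From mathcomp Require Import lra zify ring.
Import Order.TTheory GRing.Theory Num.Theory.
Import numFieldNormedType.Exports.
Local Open Scope classical_set_scope.
Local Open Scope ring_scope.
Set Implicit Arguments. Unset Strict Implicit. Unset Printing Implicit Defensive.
Local Notation factor := Pilot.Defs.factor.

Definition ev (P : nat -> Prop) := exists N0, forall N, (N0 <= N)%N -> P N.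


Lemma ev_and P Q : ev P -> ev Q -> ev (fun N => P N /\ Q N).
Proof.
move=> [a Ha] [b Hb]; exists (maxn a b) => N HN; split.
  by apply: Ha; apply: leq_trans HN; apply: leq_maxl.
by apply: Hb; apply: leq_trans HN; apply: leq_maxr.
Qed.

Lemma ev_imp (P Q : nat -> Prop) : (forall N, P N -> Q N) -> ev P -> ev Q.
Proof. by move=> H [a Ha]; exists a => N /Ha /H. Qed.

Lemma ev_ge (P : nat -> Prop) m : ev P -> ev (fun N => (m <= N)%N /\ P N).
Proof.
move=> [a Ha]; exists (maxn a m) => N HN; split.
  by apply: leq_trans HN; apply: leq_maxr.
by apply: Ha; apply: leq_trans HN; apply: leq_maxl.
Qed.

Lemma ev_fin (T : finType) (P : T -> nat -> Prop) :
  (forall x, ev (P x)) -> ev (fun N => forall x, P x N).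
Proof.
move=> H; have [f Hf] := fin_all_exists H.
exists (\max_(x : T) f x) => N HN x; apply: Hf.
by apply: leq_trans HN; apply: leq_bigmax.
Qed.

Lemma ev_seq (T : eqType) (s : seq T) (P : T -> nat -> Prop) :
  (forall x, x \in s -> ev (P x)) -> ev (fun N => forall x, x \in s -> P x N).
Proof.
elim: s => [|y s IH] H; first by exists 0%N => N _ x.
have H1 := H y (mem_head _ _).
have H2 : ev (fun N => forall x, x \in s -> P x N).
  by apply: IH => x xs; apply: H; rewrite in_cons xs orbT.
apply: (ev_imp _ (ev_and H1 H2)) => N [A B] x; rewrite in_cons => /orP [/eqP -> //|].
exact: B.
Qed.

Lemma ev_const (R : realType) (c e : R) : 0 < e -> ev (fun N => c <= e * N%:R).
Proof.
move=> e0.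
have [c0|c0] := lerP c 0.
  by exists 0%N => N _; apply: le_trans c0 _; apply: mulr_ge0; [exact: ltW|].
have h : 0 <= c / e by apply: divr_ge0; apply: ltW.
exists (Num.Def.archi_bound (c / e)) => N HN.
have h2 := archi_boundP h.
have h3 : c / e <= N%:R.
  apply: ltW; apply: lt_le_trans h2 _; by rewrite ler_nat.
rewrite mulrC -ler_pdivrMr //.
Qed.

Lemma cvg_ev (R : realType) (u : nat -> R) l :
  u @ \oo --> l -> forall e : R, 0 < e -> ev (fun n => `|l - u n| <= e).
Proof. move/cvgrPdist_le => H e e0. have [N _ HN] := H e e0. exists N => n. exact: HN. Qed.

Lemma ev_cvg (R : realType) (u : nat -> R) l :
  (forall e : R, 0 < e -> ev (fun n => `|l - u n| <= e)) -> u @ \oo --> l.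
Proof. move=> H; apply/cvgrPdist_le => e e0. have [N HN] := H e e0. by exists N. Qed.

Lemma ratio_ub (R : realType) (a : nat -> nat) (l : R) :
  (fun N => (a N)%:R / N%:R) @ \oo --> l ->
  forall e : R, 0 < e -> ev (fun N => (a N)%:R <= (l + e) * N%:R /\ (l - e) * N%:R <= (a N)%:R).
Proof.
move=> H e e0; have := ev_ge 1 (cvg_ev H e0).
apply: ev_imp => N [N1 HN].
have Np : 0 < N%:R :> R by rewrite ltr0n.
have E : (a N)%:R = ((a N)%:R / N%:R) * N%:R :> R by rewrite divfK // gt_eqF.
move: HN; rewrite ler_norml => /andP [h1 h2].
rewrite E; split; rewrite ler_pM2r //; lra.
Qed.

Fixpoint matchp (Sigma : eqType) (alpha : nat -> Sigma) (P : seq (option Sigma)) (i : nat) : bool :=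
  match P with
  | [::] => true
  | o :: P' => (if o is Some a then alpha i == a else true) && matchp alpha P' i.+1
  end.

Definition cnt (Sigma : eqType) (alpha : nat -> Sigma) P M : nat := \sum_(i < M) matchp alpha P i.

Definition muP (R : realType) (Sigma : eqType) (p : Sigma -> R) (P : seq (option Sigma)) : R :=
  \prod_(o <- P) (if o is Some a then p a else 1).

Lemma matchp_cat (Sigma : eqType) (alpha : nat -> Sigma) P1 P2 i :
  matchp alpha (P1 ++ P2) i = matchp alpha P1 i && matchp alpha P2 (i + size P1).
Proof.
elim: P1 i => [|o P1 IH] i /=; first by rewrite addn0.
by rewrite IH addSnnS andbA.
Qed.

Lemma addRN (a b : nat) : (a + b)%R = (a + b)%N.
Proof. by []. Qed.

Lemma factorS (Sigma : Type) (alpha : nat -> Sigma) i m :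
  factor alpha i m.+1 = alpha i :: factor alpha i.+1 m.
Proof.
rewrite /factor /mkseq /= !addRN addn0; congr (_ :: _).
rewrite -[1%N]/(1 + 0)%N iotaDl -map_comp; apply: eq_map => j /=.
by rewrite !addRN addnS addSn.
Qed.

Lemma matchp_map (Sigma : eqType) (alpha : nat -> Sigma) u i :
  matchp alpha (map Some u) i = (factor alpha i (size u) == u).
Proof.
elim: u i => [|a u IH] i /=; first by rewrite /factor.
by rewrite IH factorS eqseq_cons.
Qed.

Lemma matchp_nseq (Sigma : eqType) (alpha : nat -> Sigma) k i :
  matchp alpha (nseq k None) i.
Proof. by elim: k i => [|k IH] i //=. Qed.

Lemma muP_cat (R : realType) (Sigma : eqType) (p : Sigma -> R) P1 P2 :
  muP p (P1 ++ P2) = muP p P1 * muP p P2.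
Proof. by rewrite /muP big_cat. Qed.

Lemma muP_map (R : realType) (Sigma : eqType) (p : Sigma -> R) u :
  muP p (map Some u) = mu_p p u.
Proof. by rewrite /muP /mu_p big_map. Qed.

Lemma muP_nseq (R : realType) (Sigma : eqType) (p : Sigma -> R) k :
  muP p (nseq k None) = 1.
Proof. rewrite /muP; elim: k => [|k IH]; first by rewrite big_nil.
by rewrite (_ : nseq k.+1 None = None :: nseq k None) // big_cons IH mul1r. Qed.

Lemma muP_ge0 (R : realType) (Sigma : eqType) (p : Sigma -> R) P :
  (forall a, 0 <= p a <= 1) -> 0 <= muP p P <= 1.
Proof.
move=> Hp; rewrite /muP; elim: P => [|o P IH]; first by rewrite big_nil ler01 lexx.
rewrite big_cons.
case/andP: IH => h1 h2.
have /andP [h3 h4] : 0 <= (if o is Some a then p a else 1) <= 1.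
  by case: o => [a|] //; rewrite ler01 lexx.
apply/andP; split; first exact: mulr_ge0.
by rewrite mulr_ile1.
Qed.

Lemma sum_shift (f : nat -> nat) k r :
  (\sum_(i < k + r) f i = \sum_(i < r) f i + \sum_(i < k) f (r + i))%N.
Proof.
rewrite addnC big_split_ord /=; congr (_ + _)%N.
Qed.

Lemma sum_le1 (f : nat -> nat) r : (forall i, f i <= 1)%N -> (\sum_(i < r) f i <= r)%N.
Proof.
move=> H; apply: leq_trans (_ : \sum_(i < r) 1 <= r)%N.
  by apply: leq_sum => i _; apply: H.
by rewrite sum1_card card_ord.
Qed.

Lemma sum_mono (f : nat -> nat) k r : (\sum_(i < k) f i <= \sum_(i < k + r) f i)%N.
Proof.
by rewrite addnC sum_shift leq_addr.
Qed.

Lemma esum_seq_le (R : realType) (Sigma : countType) (p : Sigma -> R) (F : seq Sigma) :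
  (\esum_(a in [set: Sigma]) (p a)%:E = 1)%E -> uniq F -> \sum_(a <- F) p a <= 1.
Proof.
move=> H uF; rewrite -lee_fin -H; apply: esum_ge.
exists [set` F]; first by split; [exact: finite_seq|].
by rewrite -fsbig_seq // sumEFin.
Qed.

Lemma esum_seq_ge (R : realType) (Sigma : countType) (p : Sigma -> R) (e : R) :
  (\esum_(a in [set: Sigma]) (p a)%:E = 1)%E -> 0 < e ->
  exists F : seq Sigma, uniq F /\ 1 - e <= \sum_(a <- F) p a.
Proof.
move=> H e0.
have : ((1 - e)%:E < \esum_(a in [set: Sigma]) (p a)%:E)%E.
  by rewrite H lte_fin gtrBl.
case/ereal_sup_gt => y [A [fA _] <-].
move/finite_seqP: fA => [s ->] Hy.
exists (undup s); split; first exact: undup_uniq.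
have E : [set` s] = [set` undup s] by apply/seteqP; split => x /=; rewrite mem_undup.
rewrite E in Hy.
rewrite -fsbig_seq ?undup_uniq // sumEFin lte_fin in Hy.
exact: ltW.
Qed.

Lemma occ_cnt (Sigma : eqType) (alpha : nat -> Sigma) u M :
  (occ alpha u M <= cnt alpha (map Some u) M)%N.
Proof.
rewrite /occ /cnt; apply: leq_sum => i _.
rewrite matchp_map; by case: (_ == u); rewrite ?andbT ?andbF // leq_b1.
Qed.

Lemma cnt_occ (Sigma : eqType) (alpha : nat -> Sigma) u M :
  (cnt alpha (map Some u) M <= occ alpha u (M + size u))%N.
Proof.
rewrite /occ /cnt.
apply: leq_trans (sum_mono (fun i => ((i + size u <= M + size u) && (factor alpha i (size u) == u))%N) M (size u)).
rewrite leq_eqVlt; apply/orP; left; apply/eqP; apply: eq_bigr => i _.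
by rewrite leq_add2r (ltnW (ltn_ord i)) matchp_map.
Qed.

Lemma cnt_nil (Sigma : eqType) (alpha : nat -> Sigma) M : cnt alpha [::] M = M.
Proof. by rewrite /cnt /= sum1_card card_ord. Qed.

Lemma LB (R : realType) (Sigma : eqType) (p : Sigma -> R) (alpha : nat -> Sigma) u :
  mu_distributed p alpha -> (0 < size u)%N ->
  forall e : R, 0 < e -> ev (fun M => (mu_p p u - e) * M%:R <= (cnt alpha (map Some u) M)%:R).
Proof.
move=> Hd su e e0; have := ratio_ub (Hd u su) e0.
apply: ev_imp => M [_ H]; apply: le_trans H _.
by rewrite ler_nat occ_cnt.
Qed.

Lemma UB0 (R : realType) (Sigma : eqType) (p : Sigma -> R) (alpha : nat -> Sigma) u :
  (forall a, 0 <= p a <= 1) -> mu_distributed p alpha ->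
  forall (c : nat) (e : R), 0 < e ->
  ev (fun N => (cnt alpha (map Some u) (N + c))%:R <= (mu_p p u + e) * N%:R).
Proof.
move=> Hp Hd c e e0.
have /andP [m0 m1] := muP_ge0 (map Some u) Hp; rewrite muP_map in m0 m1.
case: u m0 m1 => [|a u] m0 m1.
  have := ev_const (c%:R) e0; apply: ev_imp => N HN.
  rewrite cnt_nil /mu_p big_nil natrD; lra.
have e2 : 0 < e / 2 by rewrite divr_gt0.
have := ev_and (ratio_ub (Hd (a :: u) isT) e2) (ev_const ((mu_p p (a :: u) + e / 2) * (c + size (a :: u))%:R) e2).
case=> N0 HN0; exists N0 => N HN.
have [[H1 _] H2] := HN0 _ (leq_trans HN (leq_addr (c + size (a :: u)) N)).
have [_ H3] := HN0 N HN.
apply: le_trans (_ : (occ alpha (a :: u) (N + c + size (a :: u)))%:R <= _).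
  by rewrite ler_nat cnt_occ.
rewrite -addnA; apply: le_trans H1 _.
rewrite natrD mulrDr.
have : (mu_p p (a :: u) + e / 2) * (c + size (a :: u))%:R <= e / 2 * N%:R by [].
lra.
Qed.

Lemma count_none_map (Sigma : eqType) (P : seq (option Sigma)) :
  count (pred1 None) P = 0%N -> P = map Some (pmap id P).
Proof. by elim: P => [|[a|] P IH] //= H; rewrite -IH. Qed.

Lemma step_nat (Sigma : eqType) (alpha : nat -> Sigma) (P1 P2 : seq (option Sigma))
   (F : seq Sigma) (N c : nat) : uniq F ->
  (cnt alpha (P1 ++ None :: P2) (N + c) + \sum_(a <- F) cnt alpha [:: Some a] N <=
   \sum_(a <- F) cnt alpha (P1 ++ Some a :: P2) (N + c) + (N + c + size P1))%N.
Proof.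
move=> uF; set M := (N + c)%N; set t := size P1.
pose g j : nat := (alpha j \notin F).
have H1 : (cnt alpha (P1 ++ None :: P2) M <=
    \sum_(a <- F) cnt alpha (P1 ++ Some a :: P2) M + \sum_(i < M) g (t + i)%N)%N.
  rewrite /cnt exchange_big /= -big_split /=; apply: leq_sum => i _.
  rewrite matchp_cat /=.
  case: (boolP (alpha (i + t)%N \in F)) => Hin.
  - rewrite (big_rem _ Hin) /= matchp_cat /= eqxx.
    by case: (matchp _ _ _ && _); rewrite ?leq_addr.
  - rewrite /g [(t + i)%N]addnC Hin.
    by case: (_ && _) => //=; rewrite addn1.
have H2 : (\sum_(i < M) g (t + i) <= \sum_(j < M + t) g j)%N.
  by rewrite sum_shift leq_addl.
have H3 : (\sum_(j < M + t) g j + \sum_(a <- F) \sum_(j < M + t) (alpha j == a) = M + t)%N.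
  rewrite exchange_big /= -big_split /= -[X in _ = X](card_ord (M + t)) -sum1_card.
  apply: eq_bigr => j _; rewrite /g.
  have E : (\sum_(a <- F) (alpha j == a) = count_mem (alpha j) F)%N.
    rewrite -sum1_count [RHS]big_mkcond /=; apply: eq_bigr => a _.
    by rewrite eq_sym; case: (a == alpha j).
  rewrite E count_uniq_mem //; by case: (alpha j \in F).
have H4 : (\sum_(a <- F) cnt alpha [:: Some a] N <= \sum_(a <- F) \sum_(j < M + t) (alpha j == a))%N.
  apply: leq_sum => a _; rewrite /cnt.
  rewrite /M -addnA; apply: (leq_trans _ (sum_mono (fun j => (alpha j == a) : nat) N (c + t))).
  by rewrite leq_eqVlt; apply/orP; left; apply/eqP; apply: eq_bigr => j _ /=; rewrite andbT.
rewrite -H3; move: H1 H2 H4; lia.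
Qed.

Lemma sum_aff (R : realType) (T : Type) (F : seq T) (f : T -> R) (x y : R) :
  \sum_(a <- F) (f a * x + y) = (\sum_(a <- F) f a) * x + y * (size F)%:R.
Proof.
elim: F => [|b F IH]; first by rewrite !big_nil mul0r mulr0 addr0.
rewrite !big_cons IH /= -addn1 natrD; ring.
Qed.

Lemma UB (R : realType) (Sigma : countType) (p : Sigma -> R) (alpha : nat -> Sigma) :
  (forall a, 0 <= p a <= 1) ->
  (\esum_(a in [set: Sigma]) (p a)%:E = 1)%E ->
  mu_distributed p alpha ->
  forall k P, count (pred1 None) P = k ->
  forall (c : nat) (e : R), 0 < e ->
  ev (fun N => (cnt alpha P (N + c))%:R <= (muP p P + e) * N%:R).
Proof.
move=> Hp Hsum Hd; elim => [|k IH] P HP c e e0.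
  by rewrite (count_none_map HP) muP_map; exact: UB0.
have Pin : None \in P by rewrite -has_pred1 has_count HP.
move: HP; case/splitPr: Pin => P1 P2 HP.
set mu := muP p (P1 ++ None :: P2).
have /andP [mu0 mu1] : 0 <= mu <= 1 by apply: muP_ge0.
have muE a : muP p (P1 ++ Some a :: P2) = p a * mu.
  rewrite /mu !muP_cat /muP !big_cons mul1r; ring.
have cntk a : count (pred1 None) (P1 ++ Some a :: P2) = k.
  by move: HP; rewrite !count_cat /= add0n addnS => /eqP; rewrite eqSS => /eqP.
have e8 : 0 < e / 8 by rewrite divr_gt0.
have [F [uF SF]] := esum_seq_ge Hsum e8.
have SF1 := esum_seq_le Hsum uF.
set S := \sum_(a <- F) p a in SF SF1.
set m := size F.
set e' := e / (8 * (m + 1)%:R).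
have m1 : 0 < (m + 1)%:R :> R by rewrite ltr0n addn1.
have e'0 : 0 < e' by rewrite /e' divr_gt0 // mulr_gt0.
have e'm : e' * m%:R <= e / 8.
  rewrite /e' mulrC mulrA ler_pdivrMr ?mulr_gt0 //.
  rewrite natrD; nra.
have A : ev (fun N => forall a, a \in F -> (cnt alpha (P1 ++ Some a :: P2) (N + c))%:R <= (muP p (P1 ++ Some a :: P2) + e') * N%:R).
  by apply: ev_seq => a _; exact: IH.
have B : ev (fun N => forall a, a \in F -> (p a - e') * N%:R <= (cnt alpha [:: Some a] N)%:R).
  apply: ev_seq => a _; have := LB Hd (isT : (0 < size [:: a])%N) e'0.
  by rewrite /mu_p big_cons big_nil mulr1.
have e4 : 0 < e / 4 by rewrite divr_gt0.
have C := ev_const ((c + size P1)%:R) e4.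
move: (ev_and A (ev_and B C)); apply: ev_imp => N [HA [HB HC]].
have Hn := step_nat alpha P1 P2 N c uF.
have Hr : (cnt alpha (P1 ++ None :: P2) (N + c))%:R + \sum_(a <- F) (cnt alpha [:: Some a] N)%:R
   <= \sum_(a <- F) (cnt alpha (P1 ++ Some a :: P2) (N + c))%:R + N%:R + (c + size P1)%:R :> R.
  by rewrite -!natr_sum -!natrD ler_nat -addnA (addnA N).
have HA' : \sum_(a <- F) (cnt alpha (P1 ++ Some a :: P2) (N + c))%:R
   <= \sum_(a <- F) (p a * (mu * N%:R) + e' * N%:R) :> R.
  rewrite big_seq_cond [X in _ <= X]big_seq_cond; apply: ler_sum => a /andP [aF _].
  by apply: le_trans (HA a aF) _; rewrite muE; lra.
have HB' : \sum_(a <- F) (p a * N%:R + (- e' * N%:R)) <= \sum_(a <- F) (cnt alpha [:: Some a] N)%:R :> R.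
  rewrite big_seq_cond [X in _ <= X]big_seq_cond; apply: ler_sum => a /andP [aF _].
  by apply: le_trans (HB a aF); lra.
rewrite !sum_aff -/S in HA' HB'.
have N0 : 0 <= N%:R :> R by [].
have h1 : S * (mu * N%:R) <= mu * N%:R by rewrite ler_piMl // mulr_ge0.
have h2 : (1 - e / 8) * ((1 - mu) * N%:R) <= S * ((1 - mu) * N%:R).
  by apply: ler_wpM2r; [apply: mulr_ge0 => //; lra | lra].
have h3 : e / 8 * ((1 - mu) * N%:R) <= e / 8 * N%:R.
  apply: ler_wpM2l; [lra|]; rewrite mulrBl mul1r; nra.
have h4 : e' * N%:R * m%:R <= e / 8 * N%:R by rewrite -mulrA [N%:R * _]mulrC mulrA; apply: ler_wpM2r.
nra.
Qed.

Lemma sum_shift_le (f : nat -> nat) N c :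
  (\sum_(i < N) f (i + c)%N <= \sum_(j < N + c) f j)%N.
Proof.
rewrite sum_shift; apply: leq_trans (leq_addl _ _).
by rewrite leq_eqVlt; apply/orP; left; apply/eqP; apply: eq_bigr => i _; rewrite addnC.
Qed.

Lemma sum_shift_ge (f : nat -> nat) N c : (forall i, f i <= 1)%N ->
  (\sum_(i < N) f i <= \sum_(i < N) f (i + c)%N + c)%N.
Proof.
move=> H; apply: leq_trans (sum_mono f N c) _.
rewrite sum_shift addnC leq_add ?sum_le1 //.
by rewrite leq_eqVlt; apply/orP; left; apply/eqP; apply: eq_bigr => i _; rewrite addnC.
Qed.

Lemma sum_sub_mul (R : realType) (g : nat -> R) k n : (1 <= n)%N -> (forall i, 0 <= g i) ->
  \sum_(q < k) g (q * n)%N <= \sum_(i < k * n) g i.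
Proof.
move=> n1 g0; elim: k => [|k IH]; first by rewrite !big_ord0.
rewrite big_ord_recr /= mulSnr big_split_ord /=; apply: lerD => //.
case: n n1 IH => [//|n] _ _; rewrite big_ord_recl /= addn0.
rewrite lerDl; apply: sumr_ge0 => i _; exact: g0.
Qed.

Lemma abs_bound (R : realType) (x d : R) : 0 < d -> `|x| <= d + x ^+ 2 / d.
Proof.
move=> d0; have h : 0 <= x ^+ 2 / d by apply: divr_ge0; [apply: sqr_ge0 | apply: ltW].
have [hx|hx] := lerP `|x| d; first lra.
have : `|x| * d <= x ^+ 2 by rewrite -real_normK ?num_real // expr2 ler_pM2l // ?ltW //; apply: lt_trans hx.
rewrite -ler_pdivlMr //; lra.
Qed.

Lemma norm_sum_dev (R : realType) K (a : 'I_K -> R) b :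
  (forall r, `|a r - b| <= K%:R) -> `|\sum_(r < K) a r - K%:R * b| <= K%:R * K%:R.
Proof.
move=> H.
have -> : \sum_(r < K) a r - K%:R * b = \sum_(r < K) (a r - b).
  by rewrite sumrB sumr_const card_ord mulr_natl.
apply: le_trans; first exact: ler_norm_sum.
apply: le_trans; first by apply: ler_sum => r _; exact: H r.
by rewrite sumr_const card_ord mulr_natl.
Qed.

Definition Xw (Sigma : eqType) (alpha : nat -> Sigma) n w i : nat := factor alpha i n == w.

Lemma block_count_X (Sigma : eqType) (alpha : nat -> Sigma) n w k :
  block_count alpha n w k = (\sum_(q < k) Xw alpha n w (q * n))%N.
Proof.
rewrite /block_count big_add1 /= big_mkord; apply: eq_bigr => q _.
by rewrite /block /Xw subn1 /=.
Qed.

Lemma cnt_X (Sigma : eqType) (alpha : nat -> Sigma) n w M : size w = n ->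
  cnt alpha (map Some w) M = (\sum_(i < M) Xw alpha n w i)%N.
Proof. by move=> sw; rewrite /cnt; apply: eq_bigr => i _; rewrite matchp_map sw. Qed.

Definition Qp (Sigma : eqType) n (w : seq Sigma) d :=
  map Some w ++ nseq (d - n) None ++ map Some w.

Lemma pair_X (Sigma : eqType) (alpha : nat -> Sigma) n w d i : size w = n -> (n <= d)%N ->
  (Xw alpha n w i * Xw alpha n w (i + d) = matchp alpha (Qp n w d) i)%N.
Proof.
move=> sw nd; rewrite /Qp !matchp_cat matchp_nseq !matchp_map size_map size_nseq sw /Xw.
by rewrite -addnA subnKC //; case: (_ == w); case: (_ == w).
Qed.

Lemma Qp_count (Sigma : eqType) n (w : seq Sigma) d :
  count (pred1 None) (Qp n w d) = (d - n)%N.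
Proof.
rewrite /Qp !count_cat.
have h : count (pred1 None) (map Some w) = 0%N by elim: w => [|a w IH] //=.
by rewrite h /= count_nseq /= mul1n addn0.
Qed.

Lemma Qp_mu (R : realType) (Sigma : eqType) (p : Sigma -> R) n w d :
  muP p (Qp n w d) = mu_p p w * mu_p p w.
Proof. by rewrite /Qp !muP_cat muP_nseq !muP_map mul1r. Qed.

Lemma pair_lt (R : realType) (Sigma : countType) (p : Sigma -> R) (alpha : nat -> Sigma) n w (r s : nat) e :
  (forall a, 0 <= p a <= 1) ->
  (\esum_(a in [set: Sigma]) (p a)%:E = 1)%E ->
  mu_distributed p alpha -> (1 <= n)%N -> size w = n -> (r < s)%N -> 0 < e ->
  ev (fun N => ((\sum_(i < N) Xw alpha n w (i + r * n) * Xw alpha n w (i + s * n))%N)%:R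
               <= (mu_p p w * mu_p p w + e) * N%:R).
Proof.
move=> Hp Hsum Hd n1 sw rs e0.
have := UB Hp Hsum Hd (Qp_count n w ((s - r) * n)) (r * n) e0.
apply: ev_imp => N; rewrite Qp_mu; apply: le_trans; rewrite ler_nat.
apply: leq_trans (sum_shift_le (matchp alpha (Qp n w ((s - r) * n))) N (r * n)).
rewrite leq_eqVlt; apply/orP; left; apply/eqP; apply: eq_bigr => i _.
rewrite -pair_X //; last by rewrite leq_pmull // subn_gt0.
by rewrite -addnA -mulnDl subnKC // ltnW.
Qed.

Lemma pair_all (R : realType) (Sigma : countType) (p : Sigma -> R) (alpha : nat -> Sigma) n w K e :
  (forall a, 0 <= p a <= 1) ->
  (\esum_(a in [set: Sigma]) (p a)%:E = 1)%E ->
  mu_distributed p alpha -> (1 <= n)%N -> size w = n -> 0 < e ->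
  ev (fun N => forall rs : 'I_K * 'I_K,
      ((\sum_(i < N) Xw alpha n w (i + rs.1 * n) * Xw alpha n w (i + rs.2 * n))%N)%:R
               <= (mu_p p w * mu_p p w + (rs.1 == rs.2)%:R + e) * N%:R).
Proof.
move=> Hp Hsum Hd n1 sw e0; apply: ev_fin => [[r s]] /=.
have /andP [m0 m1] := muP_ge0 (map Some w) Hp; rewrite muP_map in m0 m1.
have N0 N : 0 <= N%:R :> R by [].
case: (ltngtP r s) => rs.
- have := pair_lt Hp Hsum Hd n1 sw rs e0; apply: ev_imp => N H.
  rewrite (_ : (r == s) = false); last by apply/negbTE; rewrite neq_ltn rs.
  by rewrite addr0.
- have := pair_lt Hp Hsum Hd n1 sw rs e0; apply: ev_imp => N H.
  rewrite (_ : (r == s) = false); last by apply/negbTE; rewrite neq_ltn rs orbT.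
  rewrite addr0; apply: le_trans H; rewrite ler_nat leq_eqVlt; apply/orP; left.
  by apply/eqP; apply: eq_bigr => i _; rewrite mulnC.
- have -> : r = s by apply: val_inj.
  rewrite eqxx.
  have := UB Hp Hsum Hd (_ : count (pred1 None) (map Some w) = 0%N) (s * n) e0.
  have h : count (pred1 None) (map Some w) = 0%N by elim: (w) => [|a v IH] //=.
  move/(_ h); apply: ev_imp => N H.
  have H' : ((\sum_(i < N) Xw alpha n w (i + s * n) * Xw alpha n w (i + s * n))%N)%:R
           <= (mu_p p w + e) * N%:R :> R.
    rewrite -muP_map; apply: le_trans _ H; rewrite ler_nat (cnt_X _ _ sw).
    apply: leq_trans (sum_shift_le _ N (s * n)).
    by rewrite leq_eqVlt; apply/orP; left; apply/eqP; apply: eq_bigr => i _; rewrite /Xw; case: (_ == w).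
  apply: le_trans H' _; apply: ler_wpM2r => //.
  rewrite (_ : true%:R = 1 :> R) //; nra.
Qed.

Lemma sum_diag (R : realType) K (r : 'I_K) (a b N : R) :
  \sum_(s < K) ((a + (r == s)%:R + b) * N) = (K%:R * (a + b) + 1) * N.
Proof.
rewrite -mulr_suml; congr (_ * _).
rewrite (eq_bigr (fun s => (a + b) + (r == s)%:R)); last by move=> s _; ring.
rewrite big_split /= sumr_const card_ord mulr_natl; congr (_ + _).
rewrite (bigD1 r) //= eqxx big1 ?addr0 // => s /negbTE; rewrite eq_sym => ->; by [].
Qed.

Lemma S2_bound (R : realType) (Sigma : countType) (p : Sigma -> R) (alpha : nat -> Sigma) n w K e1 :
  (forall a, 0 <= p a <= 1) ->
  (\esum_(a in [set: Sigma]) (p a)%:E = 1)%E ->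
  mu_distributed p alpha -> (1 <= n)%N -> size w = n -> 0 < e1 ->
  ev (fun N => \sum_(i < N) (\sum_(r < K) (Xw alpha n w (i + r * n))%:R - K%:R * mu_p p w) ^+ 2
       <= N%:R * (K%:R + 3 * K%:R ^+ 2 * e1) + 2 * K%:R ^+ 3 * n%:R).
Proof.
move=> Hp Hsum Hd n1 sw e0.
have sw0 : (0 < size w)%N by rewrite sw.
move: (ev_and (pair_all K Hp Hsum Hd n1 sw e0) (LB Hd sw0 e0)); apply: ev_imp => N [HP HL].
have /andP [m0 m1] := muP_ge0 (map Some w) Hp; rewrite muP_map in m0 m1.
set mu := mu_p p w in HP HL m0 m1 *.
set k := K%:R : R.
have k0 : 0 <= k by [].
have N0 : 0 <= N%:R :> R by [].
pose x i r := Xw alpha n w (i + r * n).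
pose A i := \sum_(r < K) (x i r)%:R : R.
have HA2 : \sum_(i < N) A i ^+ 2 <= (k * (k * (mu * mu + e1) + 1)) * N%:R.
  have -> : \sum_(i < N) A i ^+ 2 = \sum_(r < K) \sum_(s < K) ((\sum_(i < N) x i r * x i s)%N)%:R.
    rewrite (eq_bigr (fun i : 'I_N => \sum_(r < K) \sum_(s < K) ((x i r * x i s)%N)%:R)); last first.
      move=> i _; rewrite expr2 /A mulr_suml; apply: eq_bigr => r _.
      by rewrite mulr_sumr; apply: eq_bigr => s _; rewrite natrM.
    rewrite exchange_big; apply: eq_bigr => r _; rewrite exchange_big; apply: eq_bigr => s _.
    by rewrite natr_sum.
  apply: le_trans (_ : \sum_(r < K) \sum_(s < K) ((mu * mu + (r == s)%:R + e1) * N%:R) <= _).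
    apply: ler_sum => r _; apply: ler_sum => s _; exact: (HP (r, s)).
  rewrite (eq_bigr (fun r => (k * (mu * mu + e1) + 1) * N%:R)); last by move=> r _; rewrite sum_diag.
  by rewrite sumr_const card_ord -[_ *+ K]mulr_natl /k mulrA.
have HA1 : k * ((mu - e1) * N%:R - k * n%:R) <= \sum_(i < N) A i.
  have -> : \sum_(i < N) A i = \sum_(r < K) ((\sum_(i < N) x i r)%N)%:R.
    rewrite /A exchange_big; apply: eq_bigr => r _; by rewrite natr_sum.
  apply: le_trans (_ : \sum_(r < K) ((mu - e1) * N%:R - k * n%:R) <= _).
    by rewrite sumr_const card_ord mulr_natl.
  apply: ler_sum => r _.
  have h1 := @sum_shift_ge (Xw alpha n w) N (r * n) (fun i => leq_b1 _).
  have h2 : ((r * n)%N%:R : R) <= k * n%:R.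
    by rewrite -natrM ler_nat leq_mul2r (ltnW (ltn_ord r)) orbT.
  move: HL; rewrite (cnt_X _ _ sw) => HL.
  have h3 : ((\sum_(i < N) Xw alpha n w i)%N%:R : R) <= ((\sum_(i < N) x i r)%N)%:R + (r * n)%N%:R.
    by rewrite -natrD ler_nat.
  lra.
have E : \sum_(i < N) (A i - k * mu) ^+ 2
         = \sum_(i < N) A i ^+ 2 - 2 * (k * mu) * \sum_(i < N) A i + N%:R * (k * mu) ^+ 2.
  rewrite (eq_bigr (fun i : 'I_N => (A i ^+ 2 - 2 * (k * mu) * A i) + (k * mu) ^+ 2)); last by move=> i _; ring.
  by rewrite big_split /= sumrB -mulr_sumr sumr_const card_ord -[_ *+ N]mulr_natl.
rewrite E.
have h4 : 2 * (k * mu) * (k * ((mu - e1) * N%:R - k * n%:R)) <= 2 * (k * mu) * \sum_(i < N) A i.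
  by apply: ler_wpM2l => //; apply: mulr_ge0 => //; apply: mulr_ge0.
have P1 : 0 <= k * k * e1 * N%:R by apply: mulr_ge0 => //; apply: mulr_ge0 => //; [apply: mulr_ge0 | apply: ltW].
have P2 : 0 <= k * k * k * n%:R by apply: mulr_ge0 => //; apply: mulr_ge0 => //; apply: mulr_ge0.
have h5 : mu * (k * k * e1 * N%:R) <= k * k * e1 * N%:R by rewrite ler_piMl.
have h6 : mu * (k * k * k * n%:R) <= k * k * k * n%:R by rewrite ler_piMl.
rewrite /A in HA2 h4 *.
have -> : k ^+ 2 = k * k by rewrite expr2.
have -> : k ^+ 3 = k * k * k by rewrite !exprS expr0 mulr1 mulrA.
have -> : (k * mu) ^+ 2 = k * k * mu * mu by rewrite expr2; ring.
nra.
Qed.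

Theorem proposition5p1 (R : realType) (Sigma : countType)
  (p : Sigma -> R) (alpha : nat -> Sigma) :
  inhabited Sigma ->
  (forall a, 0 <= p a <= 1) ->
  (\esum_(a in [set: Sigma]) (p a)%:E = 1)%E ->
  mu_distributed p alpha ->
  mu_block_distributed p alpha.
Proof.
move=> _ Hp Hsum Hd n n1 w sw.
have /andP [m0 m1] := muP_ge0 (map Some w) Hp; rewrite muP_map in m0 m1.
set mu := mu_p p w in m0 m1 *.
apply: ev_cvg => e e0.
have nR : 1 <= n%:R :> R by rewrite ler1n.
have e2 : 0 < e ^+ 2 by rewrite exprn_gt0.
set K := (Num.Def.archi_bound (16 * n%:R / e ^+ 2)).+1.
set k := K%:R : R.
have k1 : 1 <= k by rewrite /k ler1n.
have kbig : 16 * n%:R <= e ^+ 2 * k.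
  have h : 0 <= 16 * n%:R / e ^+ 2 by apply: divr_ge0; [lra | apply: ltW].
  have h' := archi_boundP h.
  rewrite -ler_pdivrMl // mulrC; apply: ltW; apply: lt_le_trans h' _.
  by rewrite /k /K ler_nat.
set e1 := e ^+ 2 / (48 * n%:R).
have e10 : 0 < e1 by rewrite divr_gt0 //; lra.
have [N0 HS] := S2_bound K Hp Hsum Hd n1 sw e10.
have e16 : 0 < e ^+ 2 / 16 by rewrite divr_gt0.
have [M1 HC] := ev_const (e * k / 4 + 2 * k * n%:R) e16.
exists (maxn 1 (maxn N0 M1)) => m Hm.
have m1' : (1 <= m)%N by apply: leq_trans Hm; rewrite leq_maxl.
have HSm := HS (m * n)%N (leq_trans (leq_trans (leq_trans (leq_maxl N0 M1) (leq_maxr 1 _)) Hm) (leq_pmulr m n1)).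
have HCm := HC m (leq_trans (leq_trans (leq_maxr N0 M1) (leq_maxr 1 _)) Hm).
pose A i := \sum_(r < K) (Xw alpha n w (i + r * n))%:R : R.
pose f q := Xw alpha n w (q * n).
set C := (block_count alpha n w m)%:R : R.
have CE : C = ((\sum_(q < m) f q)%N)%:R by rewrite /C block_count_X.
have Hdev : `|\sum_(q < m) A (q * n)%N - k * C| <= k * k.
  have -> : \sum_(q < m) A (q * n)%N = \sum_(r < K) ((\sum_(q < m) f (q + r)%N)%N)%:R.
    rewrite /A exchange_big; apply: eq_bigr => r _; rewrite natr_sum; apply: eq_bigr => q _.
    by rewrite /f mulnDl.
  apply: norm_sum_dev => r.
  have f1 : forall i, (f i <= 1)%N by move=> i; exact: leq_b1.
  have ha := @sum_shift_ge f m r f1.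
  have hb := @sum_shift_le f m r.
  have hc : (\sum_(j < m + r) f j <= \sum_(j < m) f j + r)%N.
    rewrite [(m + r)%N]addnC sum_shift leq_add2l.
    by apply: (@sum_le1 (fun i => f (m + i)%N)) => i; exact: f1.
  have hr : (r <= K)%N by apply: ltnW.
  have ha' : ((\sum_(q < m) f q)%N)%:R <= ((\sum_(q < m) f (q + r)%N)%N)%:R + (r : nat)%:R :> R.
    by rewrite -natrD ler_nat.
  have hb' : ((\sum_(q < m) f (q + r)%N)%N)%:R <= ((\sum_(q < m) f q)%N)%:R + (r : nat)%:R :> R.
    by rewrite -natrD ler_nat; apply: leq_trans hb hc.
  have hr' : (r : nat)%:R <= k by rewrite /k ler_nat.
  rewrite CE ler_norml; apply/andP; split; lra.
set d := e * k / 4.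
have d0 : 0 < d by rewrite /d divr_gt0 // mulr_gt0 //; lra.
pose x q := A (q * n)%N - k * mu.
have HT : `|\sum_(q < m) x q| <= m%:R * d + (\sum_(q < m) x q ^+ 2) / d.
  apply: le_trans; first exact: ler_norm_sum.
  apply: le_trans (_ : \sum_(q < m) (d + x q ^+ 2 / d) <= _).
    by apply: ler_sum => q _; apply: abs_bound.
  by rewrite big_split /= sumr_const card_ord mulr_natl -mulr_suml.
have HQ : \sum_(q < m) x q ^+ 2 <= \sum_(i < m * n) (A i - k * mu) ^+ 2.
  by apply: (@sum_sub_mul _ (fun i => (A i - k * mu) ^+ 2)) => // i; apply: sqr_ge0.
have HsumA : \sum_(q < m) A (q * n)%N = \sum_(q < m) x q + m%:R * (k * mu).
  by rewrite /x sumrB sumr_const card_ord mulr_natl subrK.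
set T := \sum_(q < m) x q in HT HsumA.
set Q := \sum_(q < m) x q ^+ 2 in HT HQ.
have mR : 1 <= m%:R :> R by rewrite ler1n.
have Hd1 : d * `|T| <= m%:R * d * d + Q.
  have h := ler_wpM2l (ltW d0) HT.
  have E : d * (Q / d) = Q by rewrite mulrC divfK ?gt_eqF.
  rewrite mulrDr E in h; lra.
have HD : `|k * C - m%:R * k * mu| <= k * k + `|T|.
  have -> : k * C - m%:R * k * mu = - (\sum_(q < m) A (q * n)%N - k * C) + T.
    by rewrite HsumA; ring.
  apply: le_trans (ler_normD _ _) _; rewrite normrN; lra.
rewrite natrM -/k in HSm.
set mm := m%:R : R.
set nn := n%:R : R.
have nn0 : nn != 0 by rewrite /nn pnatr_eq0 -lt0n.
have X0 : 0 <= mm * k ^+ 2 * (e ^+ 2 / 16).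
  apply: mulr_ge0; [apply: mulr_ge0; [lra | apply: sqr_ge0] | exact: ltW].
have eqA : mm * nn * (k + 3 * k ^+ 2 * e1) + 2 * k ^+ 3 * nn
           = mm * nn * k + mm * k ^+ 2 * (e ^+ 2 / 16) + 2 * k ^+ 3 * nn.
  rewrite /e1; field; exact: nn0.
have t1 : mm * d * d = mm * k ^+ 2 * (e ^+ 2 / 16) by rewrite /d; field.
have t3 : mm * nn * k <= mm * k ^+ 2 * (e ^+ 2 / 16).
  have h := ler_wpM2l (_ : 0 <= mm * k / 16) kbig.
  have E1 : mm * k / 16 * (16 * nn) = mm * nn * k by field.
  have E2 : mm * k / 16 * (e ^+ 2 * k) = mm * k ^+ 2 * (e ^+ 2 / 16) by field.
  rewrite -E1 -E2; apply: h; apply: divr_ge0; [apply: mulr_ge0; lra | lra].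
have t4 : d * (k * k) + 2 * k ^+ 3 * nn <= mm * k ^+ 2 * (e ^+ 2 / 16).
  have h := ler_wpM2l (sqr_ge0 k) HCm.
  have E1 : k ^+ 2 * (e * k / 4 + 2 * k * nn) = d * (k * k) + 2 * k ^+ 3 * nn by rewrite /d; field.
  have E2 : k ^+ 2 * (e ^+ 2 / 16 * mm) = mm * k ^+ 2 * (e ^+ 2 / 16) by field.
  by rewrite -E1 -E2.
have t5 : d * (e * k * mm) = 4 * (mm * k ^+ 2 * (e ^+ 2 / 16)) by rewrite /d; field.
have Hfin : d * (k * k + `|T|) <= d * (e * k * mm).
  rewrite mulrDr t5.
  have := le_trans HQ HSm; rewrite eqA => hq.
  lra.
have Hfin' : k * k + `|T| <= e * k * mm by rewrite -(ler_pM2l d0).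
have k0 : 0 < k by lra.
have H1 : `|C - mm * mu| <= e * mm.
  have E : k * C - mm * k * mu = k * (C - mm * mu) by ring.
  rewrite E normrM (gtr0_norm k0) in HD.
  have : k * `|C - mm * mu| <= k * (e * mm) by lra.
  by rewrite ler_pM2l.
have mm0 : 0 < mm by lra.
have E : mu - C / mm = - (C - mm * mu) / mm by field; rewrite gt_eqF.
rewrite E normrM normrN normfV (gtr0_norm mm0) ler_pdivrMr //.
Qed.
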